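(* Assume $\mu_1=\mu_2=\mu_3=1$. For any decision points, every point of every periodic orbit of the triangle process lies in ${}^VA$.
   Context: Fix $\rho_1,\rho_2,\rho_3\in(0,1)$ with $\rho_1+\rho_2+\rho_3>1$, $\lambda_i=\rho_i$, $\mu_i=1$, $\theta:=\rho_1+\rho_2+\rho_3-1$. $A_i^0:=\{y\in\mathbb R^3: y_1+y_2+y_3=1, y_i=0, y_l\ge0\}$, $A^0:=\bigcup_iA_i^0$. For $z\in A^0\setminus A_j^0$, $f_j(z):=\sum_{i\neq j}\frac{(1-\rho_j)z_i+\rho_i z_j}{(1-\rho_j)+\theta z_j}e_i$. For $(\hat i,\hat j,\hat k)$ equal to $(1,2,3)$ or a cyclic permutation, $(1-x)e_{\hat j}+xe_{\hat k}\in A^0_{\hat i}$ is written $(x,\hat i)$. ${}^VA_{\hat i}:=\{(x,\hat i):\max(0,1-\rho_{\hat j}/\theta)\le x\le\min(1,\rho_{\hat k}/\theta)\}$, ${}^VA:=\bigcup_{\hat i}{}^VA_{\hat i}$. Decision points $d_1,d_2,d_3\in(0,1)$; switching rule $\mathfrak R((x,\hat i))=\hat j$ if $x<d_{\hat i}$, $\hat k$ if $x>d_{\hat i}$, both allowed if $x=d_{\hat i}$; $\varphi(z):=f_{\mathfrak R(z)}(z)$ (two-valued at decision points). A periodic orbit is $u_1,\dots,u_m\in A^0$ with $u_{n+1}\in\varphi(u_n)$ for $n<m$ and $u_1\in\varphi(u_m)$. *)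

(* Defs.v *)
From Stdlib Require Import Reals.
Open Scope R_scope.

Inductive idx := I1 | I2 | I3.

Definition idx_eqb (a b : idx) : bool :=
  match a, b with
  | I1, I1 | I2, I2 | I3, I3 => true
  | _, _ => false
  end.

(* cyclic successor: 1 -> 2 -> 3 -> 1.  For a hat-index i, the cyclic
   triple (i, j, k) is (i, nxt i, nxt (nxt i)). *)
Definition nxt (i : idx) : idx :=
  match i with I1 => I2 | I2 => I3 | I3 => I1 end.

Record pt := mkpt { p1 : R; p2 : R; p3 : R }.

Definition coord (p : pt) (i : idx) : R :=
  match i with I1 => p1 p | I2 => p2 p | I3 => p3 p end.

Definition pt_of (g : idx -> R) : pt := mkpt (g I1) (g I2) (g I3).

Definition theta (rho : idx -> R) : R := rho I1 + rho I2 + rho I3 - 1.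

Definition A0i (i : idx) (y : pt) : Prop :=
  coord y I1 + coord y I2 + coord y I3 = 1 /\ coord y i = 0 /\
  (forall l, 0 <= coord y l).

Definition A0 (y : pt) : Prop := exists i, A0i i y.

(* f_j(z) = sum_{i <> j} ((1-rho_j) z_i + rho_i z_j)/((1-rho_j) + theta z_j) e_i
   (used only for z in A^0 \ A_j^0). *)
Definition f (rho : idx -> R) (j : idx) (z : pt) : pt :=
  pt_of (fun i => if idx_eqb i j then 0 else
    ((1 - rho j) * coord z i + rho i * coord z j) /
    ((1 - rho j) + theta rho * coord z j)).

(* (x, i) := (1 - x) e_j + x e_k  for the cyclic triple (i, j, k). *)
Definition xpt (x : R) (i : idx) : pt :=
  pt_of (fun l => if idx_eqb l (nxt i) then 1 - x
                  else if idx_eqb l (nxt (nxt i)) then x else 0).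

Definition VAi (rho : idx -> R) (i : idx) (p : pt) : Prop :=
  exists x, p = xpt x i /\
    Rmax 0 (1 - rho (nxt i) / theta rho) <= x /\
    x <= Rmin 1 (rho (nxt (nxt i)) / theta rho).

Definition VA (rho : idx -> R) (p : pt) : Prop := exists i, VAi rho i p.

(* Switching rule R (as a relation: z may switch to queue j);
   two-valued exactly at decision points. *)
Definition switch_rule (d : idx -> R) (z : pt) (j : idx) : Prop :=
  exists i x, 0 <= x <= 1 /\ z = xpt x i /\
    ((x < d i /\ j = nxt i) \/
     (x > d i /\ j = nxt (nxt i)) \/
     (x = d i /\ (j = nxt i \/ j = nxt (nxt i)))).

(* w \in phi(z), phi(z) = f_{R(z)}(z) *)
Definition phi (rho d : idx -> R) (z w : pt) : Prop :=
  exists j, switch_rule d z j /\ A0 z /\ ~ A0i j z /\ w = f rho j z.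

(* Periodic orbit u_0, ..., u_{m-1} (0-based) in A^0. *)
Definition periodic_orbit (rho d : idx -> R) (m : nat) (u : nat -> pt) : Prop :=
  (1 <= m)%nat /\
  (forall n : nat, (n < m)%nat -> A0 (u n)) /\
  (forall n : nat, (n + 1 < m)%nat -> phi rho d (u n) (u (n + 1)%nat)) /\
  phi rho d (u (m - 1)%nat) (u O).

(* Main.v *)
Require Import Defs.
From Stdlib Require Import Reals Lra Lia Psatz.
Open Scope R_scope.

Definition ex (rho : idx -> R) (l : idx) (p : pt) : R := theta rho * coord p l - rho l.

Lemma coord_f rho j z l : coord (Defs.f rho j z) l = if idx_eqb l j then 0 else
    ((1 - rho j) * coord z l + rho l * coord z j) /
    ((1 - rho j) + theta rho * coord z j).
Proof. destruct l; reflexivity. Qed.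

Lemma eqb_refl l : idx_eqb l l = true. Proof. destruct l; reflexivity. Qed.
Lemma eqb_a j : idx_eqb (nxt j) j = false. Proof. destruct j; reflexivity. Qed.
Lemma eqb_b j : idx_eqb (nxt (nxt j)) j = false. Proof. destruct j; reflexivity. Qed.

Lemma sum_perm (p : pt) j : coord p I1 + coord p I2 + coord p I3 =
  coord p j + coord p (nxt j) + coord p (nxt (nxt j)).
Proof. destruct j; simpl; ring. Qed.

Lemma theta_perm rho j : theta rho = rho j + rho (nxt j) + rho (nxt (nxt j)) - 1.
Proof. destruct j; unfold theta; simpl; ring. Qed.

Section S.
Variables rho : idx -> R.
Hypothesis Hrho : forall i, 0 < rho i < 1.
Hypothesis Hsum : rho I1 + rho I2 + rho I3 > 1.

Lemma theta_pos : theta rho > 0.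
Proof. unfold theta; lra. Qed.

Lemma zj_pos z j : A0 z -> ~ A0i j z -> 0 < coord z j.
Proof.
  intros [i [Hs [_ Hn]]] Hnot.
  destruct (Rle_lt_or_eq_dec 0 (coord z j) (Hn j)) as [h|h]; auto.
  exfalso; apply Hnot; split; [exact Hs|split; auto].
Qed.

Lemma step z j l : A0 z -> ~ A0i j z ->
  ex rho l (Defs.f rho j z) > 0 -> ex rho l z > ex rho l (Defs.f rho j z).
Proof.
  intros HA Hn He.
  pose proof (zj_pos z j HA Hn) as Hz.
  pose proof theta_pos as Ht.
  pose proof (Hrho j) as Hj. pose proof (Hrho l) as Hl.
  assert (HD : 0 < 1 - rho j + theta rho * coord z j) by nra.
  unfold ex in *. rewrite coord_f in *.
  destruct (idx_eqb l j).
  - lra.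
  - set (D := 1 - rho j + theta rho * coord z j) in *.
    set (ew := theta rho * ((((1 - rho j) * coord z l + rho l * coord z j)) / D) - rho l) in *.
    assert (E : ew * D = (1 - rho j) * (theta rho * coord z l - rho l)).
    { unfold ew, D in *. field. lra. }
    assert (H1 : ew * (D - (1 - rho j)) > 0).
    { apply Rmult_lt_0_compat; [lra|]. unfold D. nra. }
    nra.
Qed.

Lemma sum_w z j : A0 z -> ~ A0i j z ->
  coord (Defs.f rho j z) (nxt j) + coord (Defs.f rho j z) (nxt (nxt j)) = 1.
Proof.
  intros HA Hn.
  pose proof (zj_pos z j HA Hn) as Hz.
  pose proof theta_pos as Ht.
  pose proof (Hrho j) as Hj.
  assert (HD : 0 < 1 - rho j + theta rho * coord z j) by nra.
  destruct HA as [i [Hs _]].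
  rewrite (sum_perm z j) in Hs.
  rewrite !coord_f, eqb_a, eqb_b.
  assert (K : (1 - rho j) * coord z (nxt j) + rho (nxt j) * coord z j +
             ((1 - rho j) * coord z (nxt (nxt j)) + rho (nxt (nxt j)) * coord z j)
             - (1 - rho j + theta rho * coord z j)
             = (1 - rho j) * (coord z (nxt j) + coord z (nxt (nxt j)) + coord z j - 1)).
  { rewrite (theta_perm rho j). ring. }
  field_simplify_eq; [|lra]. nra.
Qed.

Lemma w_nonneg z j l : A0 z -> ~ A0i j z -> 0 <= coord (Defs.f rho j z) l.
Proof.
  intros HA Hn.
  pose proof (zj_pos z j HA Hn) as Hz.
  pose proof theta_pos as Ht.
  pose proof (Hrho j) as Hj. pose proof (Hrho l) as Hl.
  assert (HD : 0 < 1 - rho j + theta rho * coord z j) by nra.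
  destruct HA as [i [_ [_ Hnn]]]. pose proof (Hnn l).
  rewrite coord_f. destruct (idx_eqb l j); [lra|].
  unfold Rdiv. apply Rmult_le_pos; [nra|]. left; apply Rinv_0_lt_compat; lra.
Qed.

Lemma va_w z j : A0 z -> ~ A0i j z ->
  (forall l, ex rho l (Defs.f rho j z) <= 0) -> VA rho (Defs.f rho j z).
Proof.
  intros HA Hn Hex.
  pose proof (sum_w z j HA Hn) as Hs.
  pose proof (w_nonneg z j (nxt j) HA Hn) as N1.
  pose proof (w_nonneg z j (nxt (nxt j)) HA Hn) as N2.
  pose proof (Hex (nxt j)) as E1. pose proof (Hex (nxt (nxt j))) as E2.
  assert (Hj0 : coord (Defs.f rho j z) j = 0) by (rewrite coord_f, eqb_refl; reflexivity).
  unfold ex in E1, E2.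
  pose proof theta_pos as Ht.
  set (w := Defs.f rho j z) in *. clearbody w.
  exists j, (coord w (nxt (nxt j))). split; [|split].
  - destruct w as [a b c]; destruct j; simpl in *; unfold xpt, pt_of; simpl; f_equal; lra.
  - apply Rmax_lub; [lra|].
    assert (rho (nxt j) / theta rho * theta rho = rho (nxt j)) by (field; lra).
    nra.
  - apply Rmin_glb; [lra|].
    assert (rho (nxt (nxt j)) / theta rho * theta rho = rho (nxt (nxt j))) by (field; lra).
    nra.
Qed.

Lemma step_phi d z w l : phi rho d z w -> ex rho l w > 0 -> ex rho l z > ex rho l w.
Proof.
  intros [j [_ [HA [Hn ->]]]] He. apply step; auto.
Qed.

End S.

Theorem lemma4p4 (rho d : idx -> R)
  (Hrho : forall i, 0 < rho i < 1)
  (Hsum : rho I1 + rho I2 + rho I3 > 1)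
  (Hd : forall i, 0 < d i < 1)
  (m : nat) (u : nat -> pt)
  (Horb : periodic_orbit rho d m u) :
  forall n : nat, (n < m)%nat -> VA rho (u n).
Proof.
  destruct Horb as [Hm [HA [Hph Hw]]].
  assert (Back : forall l k, (k < m)%nat -> ex rho l (u k) > 0 ->
                 ex rho l (u O) >= ex rho l (u k)).
  { intros l k. induction k as [|k IH]; intros Hk He; [lra|].
    assert (Hp : phi rho d (u k) (u (k + 1)%nat)) by (apply Hph; lia).
    replace (S k) with (k + 1)%nat in * by lia.
    pose proof (step_phi rho Hrho Hsum d _ _ l Hp He).
    assert (ex rho l (u O) >= ex rho l (u k)) by (apply IH; [lia|lra]).
    lra. }
  assert (Np : forall l n, (n < m)%nat -> ex rho l (u n) <= 0).
  { intros l n Hn. destruct (Rle_dec (ex rho l (u n)) 0) as [h|h]; auto.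
    apply Rnot_le_lt in h. exfalso.
    pose proof (Back l n Hn h).
    pose proof (step_phi rho Hrho Hsum d _ _ l Hw ltac:(lra)).
    pose proof (Back l (m - 1)%nat ltac:(lia) ltac:(lra)).
    lra. }
  intros n Hn.
  assert (Hp : exists p, phi rho d p (u n)).
  { destruct n as [|n']. - exists (u (m - 1)%nat); exact Hw.
    - exists (u n'). replace (S n') with (n' + 1)%nat by lia. apply Hph; lia. }
  destruct Hp as [p [j [_ [HAp [Hnj Heq]]]]].
  rewrite Heq. apply va_w; auto.
  intros l. rewrite <- Heq. apply Np; auto.
Qed.
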